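(* In the FIND setting of the context, let $\mathcal C_r$ and $\mathcal C_s$ be leaf clusters of $\mathcal T$, choose consistent orderings of $\mathcal T_r^+$ and $\mathcal T_s^+$, and let $\boldsymbol\Sigma_{r,g}$, $\boldsymbol\Sigma_{s,g}$ denote the matrices produced by the elimination process for target $r$ and target $s$ respectively. Then for every cluster $\mathcal C_i$ that is a node of both $\mathcal T_r^+$ and $\mathcal T_s^+$, $$\boldsymbol\Sigma_{r,i}(\mathcal S_i\cup\mathcal B_i,\mathcal S_i\cup\mathcal B_i)=\boldsymbol\Sigma_{s,i}(\mathcal S_i\cup\mathcal B_i,\mathcal S_i\cup\mathcal B_i).$$
   Context: Setting (FIND). $\mathcal M$ is a finite set of mesh nodes; $\mathbf A$ is an invertible complex matrix indexed by $\mathcal M\times\mathcal M$, structurally symmetric ($A_{ij}\neq0\iff A_{ji}\neq0$); distinct nodes $i,j$ are connected if $A_{ij}\neq 0$. $\boldsymbol\Sigma$ is a complex matrix indexed by $\mathcal M\times\mathcal M$ with $\Sigma_{ij}=0$ whenever $i\neq j$ and $i,j$ are not connected. Matrices are indexed by $\mathcal M$ itself (the ordering only determines the sequence of eliminations). $\dagger$ is conjugate transpose, $\mathbf X^{-\dagger}=(\mathbf X^{-1})^\dagger$. $\mathbf X(X,Y)$ is the submatrix with rows in $X$, columns in $Y$. For a cluster $\mathcal C\subseteq\mathcal M$: boundary set $\mathcal B_{\mathcal C}=\{i\in\mathcal C: A_{ij}\neq 0\text{ for some } j\notin\mathcal C\}$, inner set $\mathcal I_{\mathcal C}=\mathcal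 C\setminus\mathcal B_{\mathcal C}$; for $\mathcal C_g$ write $\mathcal B_g,\mathcal I_g$. Cluster tree: $\mathcal T$ is a rooted binary tree of clusters with root $\mathcal M$, each non-leaf cluster the disjoint union of its two children. For a leaf $\mathcal C_r$ with path $r=a_0,\dots,a_d$ (root) and $b_k$ the sibling of $a_k$, the augmented tree $\mathcal T_r^+$ has root $\mathcal C_{-r}=\mathcal M\setminus\mathcal C_r$; for $0\le k\le d-2$, $\mathcal C_{-a_k}=\mathcal M\setminus\mathcal C_{a_k}$ has children $\mathcal C_{b_k}$ and $\mathcal C_{-a_{k+1}}$, with $\mathcal C_{-a_{d-1}}$ identified with $\mathcal C_{b_{d-1}}$; each basic cluster $\mathcal C_{b_k}$ carries its subtree from $\mathcal T$. (A node's subtree is determined by the node, so a cluster common to two augmented trees has the same subtree in both.) Private inner nodes: $\mathcal S_g=\mathcal I_g$ for a leaf $g$ of an augmented tree; $\mathcal S_g=\mathcal I_g\setminus(\mathcal I_i\cup\mathcal I_j)$ if $g$ has children $i,j$. Consistent ordering: a total order $g_1,\dots,g_m$ of the nodes of $\mathcal T_r^+$ with every node after all its descendants. Elimination for target $r$: $\mathbf A_{r,g_1}=\mathbf A$, $\boldsymbol\Sigma_{r,g_1}=\boldsymbol\Sigma$; for each $g$ (with $\mathbf A_{r,g}(\mathcal S_g,\mathcal S_g)$ invertible), $\mathcal L_g=\mathbf A_{r,g}(\mathcal B_g,\mathcal S_g)\mathbf A_{r,g}(\mathcal S_g,\mathcal S_g)^{-1}$, $\mathbf L_g$ is the identity on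 $\mathcal M$ except $\mathbf L_g(\mathcal B_g,\mathcal S_g)=\mathcal L_g$, $\mathbf A_{r,g+}=\mathbf L_g^{-1}\mathbf A_{r,g}$, $\boldsymbol\Sigma_{r,g+}=\mathbf L_g^{-1}\boldsymbol\Sigma_{r,g}\mathbf L_g^{-\dagger}$, and $\mathbf A_{r,g_{t+1}}=\mathbf A_{r,g_t+}$, $\boldsymbol\Sigma_{r,g_{t+1}}=\boldsymbol\Sigma_{r,g_t+}$. Thus $\boldsymbol\Sigma_{r,i}$ is the matrix just before eliminating $\mathcal S_i$. *)

(* Defs.v *)
From mathcomp Require Import all_boot all_order all_algebra.
Set Implicit Arguments. Unset Strict Implicit. Unset Printing Implicit Defensive.
Import Order.TTheory GRing.Theory Num.Theory.
Local Open Scope ring_scope.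

Section FIND.
Variables (C : numClosedFieldType) (n : nat).
Local Notation node := 'I_n.

Inductive ctree :=
| CLeaf of {set node}
| CNode of {set node} & ctree & ctree.

Definition clus (t : ctree) : {set node} :=
  match t with CLeaf X => X | CNode X _ _ => X end.

Fixpoint wf_ctree (t : ctree) : bool :=
  match t with
  | CLeaf X => X != set0
  | CNode X l r => [&& X == clus l :|: clus r, [disjoint clus l & clus r],
                     wf_ctree l & wf_ctree r]
  end.

Fixpoint subtrees (t : ctree) : seq ctree :=
  t :: match t with CLeaf _ => [::] | CNode _ l r => subtrees l ++ subtrees r end.

Definition descendants (t : ctree) : seq ctree := behead (subtrees t).

Fixpoint memP (x : ctree) (s : seq ctree) : Prop :=
  match s with [::] => False | y :: s' => x = y \/ memP x s' end.

Definition dflt : ctree := CLeaf set0.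

(* Augmented tree of a leaf reached by path p (true = left child).
   acc is the augmented subtree whose cluster is M \ C_t. *)
Fixpoint aug_from (acc t : ctree) (p : seq bool) : option ctree :=
  match t, p with
  | CLeaf _, [::] => Some acc
  | CNode _ l r, b :: p' =>
      let a := if b then l else r in
      let sib := if b then r else l in
      aug_from (CNode (~: clus a) sib acc) a p'
  | _, _ => None
  end.

(* T_r^+ for the leaf of t at path p; the root C_{-a_{d-1}} is identified
   with the sibling subtree C_{b_{d-1}}.  None if p does not lead to a leaf
   or the leaf is the root (d = 0). *)
Definition aug_tree (t : ctree) (p : seq bool) : option ctree :=
  match t, p with
  | CNode _ l r, b :: p' => aug_from (if b then r else l) (if b then l else r) p'
  | _, _ => None
  end.

Definition consistent_ordering (Tr : ctree) (ord : seq ctree) : Prop :=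
  (forall x, memP x ord <-> memP x (subtrees Tr)) /\
  (forall i j, (i < size ord)%N -> (j < size ord)%N ->
     nth dflt ord i = nth dflt ord j -> i = j) /\
  (forall k, (k < size ord)%N -> forall y, memP y (descendants (nth dflt ord k)) ->
     exists2 k', (k' < k)%N & nth dflt ord k' = y).

Variable A : 'M[C]_n.

Definition boundary (X : {set node}) : {set node} :=
  [set i in X | [exists j, (j \notin X) && (A i j != 0)]].
Definition inner (X : {set node}) : {set node} := X :\: boundary X.

Definition priv (g : ctree) : {set node} :=
  match g with
  | CLeaf X => inner X
  | CNode X l r => inner X :\: (inner (clus l) :|: inner (clus r))
  end.

(* selection matrix of a set S: sel S *m M *m (sel S)^T = M(S,S) *)
Definition sel (S : {set node}) : 'M[C]_(#|S|, n) :=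
  \matrix_(k < #|S|, j < n) ((enum_val k == j)%:R).
Definition subM (M : 'M[C]_n) (S : {set node}) : 'M[C]_#|S| :=
  sel S *m M *m (sel S)^T.
Definition proj (B : {set node}) : 'M[C]_n := diag_mx (\row_j ((j \in B)%:R)).

Definition ctrmx (M : 'M[C]_n) : 'M[C]_n := (map_mx (fun x => x^*) M)^T.

(* L_g: identity except L_g(B_g,S_g) = M(B_g,S_g) M(S_g,S_g)^{-1} *)
Definition Lmat (M : 'M[C]_n) (g : ctree) : 'M[C]_n :=
  let S := priv g in let B := boundary (clus g) in
  1%:M + proj B *m M *m (sel S)^T *m invmx (subM M S) *m sel S.

Definition elim_step (AS : 'M[C]_n * 'M[C]_n) (g : ctree) : 'M[C]_n * 'M[C]_n :=
  let Li := invmx (Lmat AS.1 g) in (Li *m AS.1, Li *m AS.2 *m ctrmx Li).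

(* (A_{r,g_{k+1}}, Sigma_{r,g_{k+1}}): matrices just before eliminating the
   k-th node (0-based) of the ordering *)
Definition elim_before (Sig : 'M[C]_n) (ord : seq ctree) (k : nat) :=
  foldl elim_step (A, Sig) (take k ord).

End FIND.

(* Main.v *)
From HB Require Import structures.
Require Import Defs.
From mathcomp Require Import all_boot all_order all_algebra.
Set Implicit Arguments. Unset Strict Implicit. Unset Printing Implicit Defensive.
Import GRing.Theory Num.Theory.
Local Open Scope ring_scope.

Section Mat.
Variables (C : numClosedFieldType) (n : nat) (A : 'M[C]_n).
Local Notation PX := (proj C).
Local Notation node := 'I_n.

Lemma proj_mul (B X : {set node}) : PX B *m PX X = PX (B :&: X).
Proof.
rewrite /proj mulmx_diag; congr diag_mx; apply/rowP => j; rewrite !mxE inE.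
by case: (j \in B); case: (j \in X); rewrite /= ?mulr1 ?mulr0.
Qed.

Lemma proj0 : PX (set0 : {set node}) = 0.
Proof. by apply/matrixP => i j; rewrite !mxE inE mul0rn. Qed.

Lemma proj_subl (B X : {set node}) : B \subset X -> PX B *m PX X = PX B.
Proof. by move=> h; rewrite proj_mul (setIidPl h). Qed.
Lemma proj_subr (B X : {set node}) : B \subset X -> PX X *m PX B = PX B.
Proof. by move=> h; rewrite /proj diag_mxC -/(PX _) -/(PX _) proj_subl. Qed.
Lemma proj_dis (B X : {set node}) : [disjoint B & X] -> PX B *m PX X = 0.
Proof. by move=> h; rewrite proj_mul (disjoint_setI0 h) proj0. Qed.
Lemma proj_id (X : {set node}) : PX X *m PX X = PX X.
Proof. exact: proj_subl. Qed.
Lemma tr_proj (X : {set node}) : (PX X)^T = PX X.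
Proof. exact: tr_diag_mx. Qed.

Lemma sel_proj (S X : {set node}) : S \subset X -> sel C S *m PX X = sel C S.
Proof.
move=> h; rewrite /proj mul_mx_diag; apply/matrixP => k j; rewrite !mxE.
case: eqP => [<-|]; last by rewrite mul0r.
by rewrite (subsetP h _ (enum_valP k)) mulr1.
Qed.
Lemma sel_proj0 (S X : {set node}) : [disjoint S & X] -> sel C S *m PX X = 0.
Proof.
move=> h; rewrite /proj mul_mx_diag; apply/matrixP => k j; rewrite !mxE.
case: eqP => [<-|]; last by rewrite mul0r.
by rewrite (disjointFr h (enum_valP k)) mulr0.
Qed.
Lemma proj_selT (S X : {set node}) : S \subset X -> PX X *m (sel C S)^T = (sel C S)^T.
Proof. by move=> h; rewrite -tr_proj -trmx_mul sel_proj. Qed.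

Lemma ctr_mul (M N : 'M[C]_n) : ctrmx (M *m N) = ctrmx N *m ctrmx M.
Proof. by rewrite /ctrmx map_mxM trmx_mul. Qed.
Lemma ctr_proj (X : {set node}) : ctrmx (PX X) = PX X.
Proof.
apply/matrixP => i j; rewrite /ctrmx /proj !mxE eq_sym.
by case: eqP => [->|]; rewrite ?mulr1n ?mulr0n ?conjC_nat ?conjC0.
Qed.

Lemma proj_entry (X : {set node}) (M : 'M[C]_n) x y : x \in X -> y \in X ->
  (PX X *m M *m PX X) x y = M x y.
Proof.
move=> hx hy; rewrite /proj mul_mx_diag mxE mul_diag_mx !mxE hx hy.
by rewrite mul1r mulr1.
Qed.

Definition Emat (M : 'M[C]_n) (g : ctree n) : 'M[C]_n :=
  PX (boundary A (clus g)) *m M *m (sel C (priv A g))^T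
     *m invmx (subM M (priv A g)) *m sel C (priv A g).

Lemma bnd_sub (X : {set node}) : boundary A X \subset X.
Proof. by apply/subsetP => x; rewrite inE => /andP[]. Qed.
Lemma priv_inner g : priv A g \subset inner A (clus g).
Proof. by case: g => [X|X l r] //=; apply: subsetDl. Qed.
Lemma priv_sub g : priv A g \subset clus g.
Proof. apply: subset_trans (priv_inner g) _; exact: subsetDl. Qed.
Lemma priv_bnd g : [disjoint priv A g & boundary A (clus g)].
Proof.
apply: disjointWl (priv_inner g) _; rewrite /inner disjoints_subset.
by rewrite setDE subsetIr.
Qed.

Lemma EE (M M' : 'M[C]_n) g h : [disjoint priv A g & boundary A (clus h)] ->
  Emat M g *m Emat M' h = 0.
Proof.
move=> dis; rewrite {1}/Emat.
have -> : Emat M' h = PX (boundary A (clus h)) *m (M' *m (sel C (priv A h))^T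
     *m invmx (subM M' (priv A h)) *m sel C (priv A h)) by rewrite /Emat !mulmxA.
rewrite mulmxA -(mulmxA _ (sel C (priv A g))) sel_proj0 //.
by rewrite mulmx0 mul0mx.
Qed.

Lemma E_projR M g (X : {set node}) : clus g \subset X -> Emat M g *m PX X = Emat M g.
Proof.
by move=> h; rewrite /Emat -mulmxA sel_proj // (subset_trans (priv_sub g) h).
Qed.
Lemma E_projL M g (X : {set node}) : clus g \subset X -> PX X *m Emat M g = Emat M g.
Proof.
move=> h; rewrite /Emat !mulmxA proj_subr //.
exact: subset_trans (bnd_sub _) h.
Qed.
Lemma E_projR0 M g (X : {set node}) : [disjoint clus g & X] -> Emat M g *m PX X = 0.
Proof.
by move=> h; rewrite /Emat -mulmxA sel_proj0 ?mulmx0 // (disjointWl (priv_sub g) h).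
Qed.
Lemma E_projL0 M g (X : {set node}) : [disjoint clus g & X] -> PX X *m Emat M g = 0.
Proof.
move=> h; rewrite /Emat !mulmxA proj_dis ?mul0mx //.
by rewrite disjoint_sym (disjointWl (bnd_sub _) h).
Qed.

Lemma E_XMX M g (X : {set node}) : clus g \subset X -> Emat M g = Emat (PX X *m M *m PX X) g.
Proof.
move=> h.
have hB : boundary A (clus g) \subset X := subset_trans (bnd_sub _) h.
have hS : priv A g \subset X := subset_trans (priv_sub g) h.
rewrite /Emat /subM !mulmxA proj_subl // sel_proj //.
by rewrite -!(mulmxA _ (PX X) (sel C _)^T) proj_selT.
Qed.

Definition Li (M : 'M[C]_n) g := invmx (Lmat A M g).

Lemma Li_E M g : Li M g = 1%:M - Emat M g.
Proof.
have H : Lmat A M g *m (1%:M - Emat M g) = 1%:M.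
  rewrite /Lmat -/(Emat M g) mulmxDl mul1mx mulmxBr mulmx1 EE ?priv_bnd //.
  by rewrite subr0 subrK.
case: (mulmx1_unit H) => U _.
rewrite /Li -[invmx _]mulmx1.
by rewrite -{1}H mulmxA mulVmx // mul1mx.
Qed.

Lemma stepE (s : 'M[C]_n * 'M[C]_n) g :
  elim_step A s g = (Li s.1 g *m s.1, Li s.1 g *m s.2 *m ctrmx (Li s.1 g)).
Proof. by []. Qed.

Definition agree (X : {set node}) (s s' : 'M[C]_n * 'M[C]_n) :=
  PX X *m s.1 *m PX X = PX X *m s'.1 *m PX X /\
  PX X *m s.2 *m PX X = PX X *m s'.2 *m PX X.

Lemma lemK (L K : 'M[C]_n) (X : {set node}) : PX X *m L = K -> L *m PX X = K -> K *m PX X = K ->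
  forall M, PX X *m (L *m M) *m PX X = K *m (PX X *m M *m PX X) /\
  PX X *m (L *m M *m ctrmx L) *m PX X = K *m (PX X *m M *m PX X) *m ctrmx K.
Proof.
move=> h1 h2 h3 M; split.
  by rewrite mulmxA h1 -{1}h3 !mulmxA.
have h4 : ctrmx L *m PX X = ctrmx K by rewrite -{1}ctr_proj -ctr_mul h1.
have h5 : ctrmx K = PX X *m ctrmx K by rewrite -{1}h3 ctr_mul ctr_proj.
rewrite !mulmxA h1 -!mulmxA h4 h5 !mulmxA.
by rewrite -(mulmxA _ (PX X) (PX X)) proj_id h3.
Qed.

Lemma step_agree (X : {set node}) g s s' : clus g \subset X -> agree X s s' ->
  agree X (elim_step A s g) (elim_step A s' g).
Proof.
move=> h [a1 a2]; rewrite !stepE.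
have hK : forall M, PX X *m Li M g = PX X - Emat M g /\ Li M g *m PX X = PX X - Emat M g
    /\ (PX X - Emat M g) *m PX X = PX X - Emat M g.
  move=> M; rewrite Li_E mulmxBr mulmxBl mulmx1 mul1mx E_projL // E_projR //.
  by rewrite mulmxBl proj_id E_projR.
have eE : Emat s.1 g = Emat s'.1 g by rewrite (E_XMX _ h) a1 -E_XMX.
case: (hK s.1) => k1 [k2 k3]; case: (hK s'.1) => k1' [k2' k3'].
case: (lemK k1 k2 k3 s.1) => e1 _; case: (lemK k1 k2 k3 s.2) => _ e2.
case: (lemK k1' k2' k3' s'.1) => e1' _; case: (lemK k1' k2' k3' s'.2) => _ e2'.
split => /=.
  by apply: (etrans e1); apply: esym; apply: (etrans e1'); rewrite eE a1.
by apply: (etrans e2); apply: esym; apply: (etrans e2'); rewrite eE a2.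
Qed.

Lemma step_dis (X : {set node}) g s : [disjoint clus g & X] -> agree X (elim_step A s g) s.
Proof.
move=> h; rewrite stepE.
have hK : forall M, PX X *m Li M g = PX X /\ Li M g *m PX X = PX X /\ PX X *m PX X = PX X.
  move=> M; rewrite Li_E mulmxBr mulmxBl mulmx1 mul1mx E_projL0 // E_projR0 //.
  by rewrite !subr0 proj_id.
case: (hK s.1) => k1 [k2 k3].
case: (lemK k1 k2 k3 s.1) => e1 _; case: (lemK k1 k2 k3 s.2) => _ e2.
split => /=; rewrite ?e1 ?e2 !mulmxA proj_id //.
by rewrite -mulmxA ctr_proj proj_id.
Qed.

Lemma step_comm g h s : [disjoint clus g & clus h] ->
  elim_step A (elim_step A s g) h = elim_step A (elim_step A s h) g.
Proof.
move=> dis.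
have Eh : Emat (Li s.1 g *m s.1) h = Emat s.1 h.
  case: (step_dis s (disjointWl (subxx _) dis)) => e _.
  by rewrite (E_XMX _ (subxx (clus h))) e -E_XMX.
have Eg : Emat (Li s.1 h *m s.1) g = Emat s.1 g.
  rewrite disjoint_sym in dis.
  case: (step_dis s (disjointWl (subxx _) dis)) => e _.
  by rewrite (E_XMX _ (subxx (clus g))) e -E_XMX.
have c : Li s.1 h *m Li s.1 g = Li s.1 g *m Li s.1 h.
  have d1 : [disjoint priv A g & boundary A (clus h)].
    exact: disjointW (priv_sub g) (bnd_sub _) dis.
  have d2 : [disjoint priv A h & boundary A (clus g)].
    by rewrite disjoint_sym in dis; exact: disjointW (priv_sub h) (bnd_sub _) dis.
  rewrite !Li_E !mulmxBl !mul1mx !mulmxBr !mulmx1 !EE // !subr0.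
  by rewrite addrAC.
have Lh : Li (Li s.1 g *m s.1) h = Li s.1 h by rewrite Li_E Eh -Li_E.
have Lg : Li (Li s.1 h *m s.1) g = Li s.1 g by rewrite Li_E Eg -Li_E.
rewrite !stepE /= Lh Lg.
congr pair; first by rewrite !mulmxA c.
by rewrite !mulmxA -!mulmxA -!ctr_mul !mulmxA c.
Qed.

End Mat.

Section Tree.
Variable n : nat.
Local Notation ct := (ctree n).

Fixpoint ct_eqb (a b : ct) : bool :=
  match a, b with
  | CLeaf X, CLeaf Y => X == Y
  | CNode X l r, CNode Y l' r' => [&& X == Y, ct_eqb l l' & ct_eqb r r']
  | _, _ => false
  end.

Lemma ct_eqP : Equality.axiom ct_eqb.
Proof.
elim=> [X|X l IHl r IHr] [Y|Y l' r'] /=; try by constructor.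
  by apply: (iffP eqP) => [->|[]].
case: eqP => [->|ne]; last by constructor => [[]].
case: (IHl l') => [->|ne]; last by constructor => [[]].
case: (IHr r') => [->|ne]; last by constructor => [[]].
by constructor.
Qed.

End Tree.
HB.instance Definition _ (n : nat) := hasDecEq.Build (ctree n) (@ct_eqP n).
Section Tree2.
Variable n : nat.
Local Notation ct := (ctree n).

Lemma memPE (x : ct) s : memP x s <-> x \in s.
Proof.
elim: s => [|y s IH] //=; rewrite in_cons; split.
  by case=> [->|/IH ->]; rewrite ?eqxx ?orbT.
by case/orP=> [/eqP ->|/IH]; [left|right].
Qed.

Definition desc (a b : ct) : bool := a \in descendants b.

Lemma wf_sub (t a : ct) : wf_ctree t -> a \in subtrees t -> wf_ctree a.
Proof.
elim: t => [X|X l IHl r IHr] /=; first by rewrite inE => ? /eqP ->.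
move=> /[dup] w /and4P[_ _ wl wr]; rewrite inE mem_cat.
by case/or3P => [/eqP ->|/(IHl wl)|/(IHr wr)].
Qed.

Lemma clus_sub (t a : ct) : wf_ctree t -> a \in subtrees t -> clus a \subset clus t.
Proof.
elim: t => [X|X l IHl r IHr] /=; first by rewrite inE => ? /eqP ->.
move=> /and4P[/eqP eX _ wl wr]; rewrite inE mem_cat.
case/or3P => [/eqP ->|/(IHl wl) h|/(IHr wr) h] //; rewrite eX.
  exact: subset_trans h (subsetUl _ _).
exact: subset_trans h (subsetUr _ _).
Qed.

Lemma desc_sub (a b : ct) : wf_ctree b -> desc a b -> clus a \subset clus b.
Proof.
case: b => [X|X l r] //= /and4P[/eqP eX _ wl wr]; rewrite /desc /= mem_cat.
case/orP => [/(clus_sub wl) h|/(clus_sub wr) h]; rewrite eX.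
  exact: subset_trans h (subsetUl _ _).
exact: subset_trans h (subsetUr _ _).
Qed.

Lemma wf_ne (t : ct) : wf_ctree t -> clus t != set0.
Proof.
elim: t => [X|X l IHl r IHr] //= /and4P[/eqP eX _ wl _].
apply: contraNneq (IHl wl) => e.
by rewrite -subset0 -e eX subsetUl.
Qed.

Lemma trich (t a b : ct) : wf_ctree t -> a \in subtrees t -> b \in subtrees t ->
  [\/ a = b, desc a b, desc b a | [disjoint clus a & clus b]].
Proof.
elim: t => [X|X l IHl r IHr] /=.
  by move=> _; rewrite !inE => /eqP -> /eqP ->; constructor 1.
move=> /and4P[/eqP eX dlr wl wr]; rewrite !inE !mem_cat.
have D : forall x, (x \in subtrees l) || (x \in subtrees r) -> x \in descendants (CNode X l r).
  by move=> x; rewrite /descendants /= mem_cat.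
case/orP=> [/eqP ->|ha]; case/orP=> [/eqP ->|hb].
- by constructor 1.
- by constructor 3; apply: D.
- by constructor 2; apply: D.
case/orP: ha => ha; case/orP: hb => hb.
- exact: IHl.
- constructor 4; exact: disjointW (clus_sub wl ha) (clus_sub wr hb) dlr.
- constructor 4; rewrite disjoint_sym in dlr.
  exact: disjointW (clus_sub wr ha) (clus_sub wl hb) dlr.
- exact: IHr.
Qed.


Lemma aug_from_wf (t acc Tr : ct) p : wf_ctree t -> wf_ctree acc ->
  clus acc = ~: clus t -> aug_from acc t p = Some Tr -> wf_ctree Tr.
Proof.
elim: t acc p => [X|X l IHl r IHr] acc [|b p'] //=.
- by move=> _ wa _ [<-].
- move=> /and4P[/eqP eX dlr wl wr] wacc eacc.
  case: b => /=; [apply: IHl wl _ _ | apply: IHr wr _ _] => //=.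
  + rewrite wr wacc andbT andbT; apply/andP; split.
      apply/eqP/setP => x; rewrite eacc eX !inE.
      case hl: (x \in clus l); last by case: (x \in clus r).
      by rewrite (disjointFr dlr hl).
    by rewrite eacc eX disjoints_subset setCK subsetUr.
  + rewrite wl wacc andbT andbT; apply/andP; split.
      apply/eqP/setP => x; rewrite eacc eX !inE.
      case hr: (x \in clus r); last by case: (x \in clus l).
      by rewrite (disjointFl dlr hr).
    by rewrite eacc eX disjoints_subset setCK subsetUl.
Qed.

Lemma aug_tree_wf (T Tr : ct) p : wf_ctree T -> clus T = setT ->
  aug_tree T p = Some Tr -> wf_ctree Tr.
Proof.
case: T => [X|X l r] //; case: p => [|b p'] //= /[dup] wT /and4P[/eqP eX dlr wl wr] eT.
case: b; apply: aug_from_wf => //; apply/setP => x; rewrite inE.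
  have : x \in X by rewrite eT inE.
  rewrite eX inE; case hl: (x \in clus l) => //= _.
  by rewrite (disjointFr dlr hl).
have : x \in X by rewrite eT inE.
rewrite eX inE; case hr: (x \in clus r) => /=; first by rewrite (disjointFl dlr hr).
by rewrite orbF.
Qed.

End Tree2.

Section Main.
Variables (C : numClosedFieldType) (n : nat) (A : 'M[C]_n).
Local Notation step := (elim_step A).
Local Notation ct := (ctree n).
Definition nd (x y : ct) := ~~ desc y x.

Lemma agree_trans (X : {set 'I_n}) (a b c : 'M[C]_n * 'M[C]_n) : agree X a b -> agree X b c -> agree X a c.
Proof. by move=> [e1 e2] [f1 f2]; split; [rewrite e1 | rewrite e2]. Qed.
Lemma agree_sym (X : {set 'I_n}) (a b : 'M[C]_n * 'M[C]_n) : agree X a b -> agree X b a.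
Proof. by move=> [e1 e2]; split. Qed.
Lemma agree_refl (X : {set 'I_n}) (a : 'M[C]_n * 'M[C]_n) : agree X a a.
Proof. by split. Qed.

Lemma fold_agree (X : {set 'I_n}) s st st' :
  all (fun g => (clus g \subset X) || [disjoint clus g & X]) s -> agree X st st' ->
  agree X (foldl step st s) (foldl step st' [seq g <- s | clus g \subset X]).
Proof.
elim: s st st' => [|g s IH] st st' //= /andP[hg hs] ag.
case: ifP => hsub /=; first exact: IH hs (step_agree A hsub ag).
apply: IH hs _; apply: agree_trans _ ag; apply: (step_dis A).
by move: hg; rewrite hsub.
Qed.

Lemma fold_comm h u st : {in u, forall a, [disjoint clus a & clus h]} ->
  foldl step (step st h) u = step (foldl step st u) h.
Proof.
elim: u st => [|a u IH] st //= hu.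
rewrite (step_comm A); last by rewrite disjoint_sym; apply: hu; rewrite mem_head.
by apply: IH => x hx; apply: hu; rewrite in_cons hx orbT.
Qed.

Lemma fold_perm (s1 s2 : seq ct) st : perm_eq s1 s2 -> uniq s1 ->
  pairwise nd s1 -> pairwise nd s2 ->
  {in s1 &, forall a b, [\/ a = b, desc a b, desc b a | [disjoint clus a & clus b]]} ->
  foldl step st s1 = foldl step st s2.
Proof.
elim: s1 s2 st => [|h t IH] s2 st.
  by move=> /perm_size; case: s2.
move=> pe u1 p1 p2 tri.
have hs2 : h \in s2 by rewrite -(perm_mem pe) mem_head.
move: p2 pe; case/splitPr: hs2 => u v p2 pe.
have u2 : uniq (u ++ h :: v) by rewrite -(perm_uniq pe).
have hu : {in u, forall a, [disjoint clus a & clus h]}.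
  move=> a au.
  have aht : a \in h :: t by rewrite (perm_mem pe) mem_cat au.
  have neq : a != h.
    apply/eqP => e; move: u2; rewrite cat_uniq => /and3P[_ hn _].
    by move: hn; rewrite /= -e au.
  have at' : a \in t by move: aht; rewrite in_cons (negPf neq).
  have n1 : ~~ desc a h.
    by move: p1; rewrite pairwise_cons => /andP[/allP/(_ a at')].
  have n2 : ~~ desc h a.
    move: p2; rewrite pairwise_cat => /and3P[/allrelP H _ _].
    by apply: (H a h au); rewrite mem_head.
  case: (tri a h aht (mem_head _ _)) => // [e|d|d].
  - by rewrite e eqxx in neq.
  - by rewrite d in n1.
  - by rewrite d in n2.
rewrite foldl_cat /= -fold_comm // -foldl_cat.
apply: IH.
- rewrite -(perm_cons h); apply: (perm_trans pe).
  by rewrite -[h :: v]cat1s perm_catCA.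
- by case/andP: u1.
- by move: p1; rewrite pairwise_cons => /andP[].
- apply: subseq_pairwise p2; apply: cat_subseq; [exact: subseq_refl | exact: subseq_cons].
- by move=> a b ha hb; apply: tri; rewrite in_cons ?ha ?hb orbT.
Qed.

Lemma side (Tr : ct) ord i k : wf_ctree Tr -> consistent_ordering Tr ord ->
  (k < size ord)%N -> nth (dflt n) ord k = i ->
  [/\ all (fun g => (clus g \subset clus i) || [disjoint clus g & clus i]) (take k ord),
   uniq [seq g <- take k ord | clus g \subset clus i],
   [seq g <- take k ord | clus g \subset clus i] =i descendants i,
   pairwise nd [seq g <- take k ord | clus g \subset clus i] &
   {in [seq g <- take k ord | clus g \subset clus i] &, forall a b,
      [\/ a = b, desc a b, desc b a | [disjoint clus a & clus b]]}].
Proof.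
move=> wT [cm [ci cd]] hk hi.
have memO : forall x, (x \in ord) = (x \in subtrees Tr).
  by move=> x; apply/idP/idP => h; apply/memPE; apply/cm; apply/memPE.
have U : uniq ord.
  by apply/(uniqP (dflt n)) => a b ha hb; apply: ci.
have iT : i \in subtrees Tr by rewrite -memO -hi mem_nth.
have inT : forall g, g \in take k ord ->
    exists2 j, (j < k)%N && (j < size ord)%N & nth (dflt n) ord j = g.
  move=> g hg; exists (index g (take k ord)).
    by move: hg; rewrite -index_mem size_take_min leq_min.
  rewrite -(nth_take _ (_ : index g (take k ord) < k)%N) ?nth_index //.
  by move: hg; rewrite -index_mem size_take_min leq_min => /andP[].
have key : forall g, g \in take k ord -> desc g i || [disjoint clus g & clus i].
  move=> g /inT [j /andP[jk js] hj].
  have gT : g \in subtrees Tr by rewrite -memO -hj mem_nth.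
  case: (trich wT gT iT) => [e|d|d|d]; rewrite ?d ?orbT //.
  - have := ci j k js hk; rewrite hj hi => /(_ e) ejk.
    by rewrite ejk ltnn in jk.
  - rewrite -hj in d; case: (cd j js i (proj2 (memPE _ _) d)) => k' k'j e.
    have := ci k' k (ltn_trans k'j js) hk; rewrite e hi => /(_ erefl) ek.
    by have := ltn_trans k'j jk; rewrite ek ltnn.
have fT : forall g, g \in [seq g <- take k ord | clus g \subset clus i] -> g \in subtrees Tr.
  by move=> g; rewrite mem_filter => /andP[_ /mem_take]; rewrite memO.
split.
- apply/allP => g hg; case/orP: (key g hg) => [d|d]; last by rewrite d orbT.
  by rewrite (desc_sub (wf_sub wT iT) d).
- by apply: filter_uniq; apply: take_uniq.
- move=> g; apply/idP/idP.
    move=> /[dup] gf /fT gT; move: gf; rewrite mem_filter => /andP[hs hg].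
    case/orP: (key g hg) => // d.
    have : clus g = set0 by rewrite -(setIidPl hs) (disjoint_setI0 d).
    by move/eqP; rewrite (negPf (wf_ne (wf_sub wT gT))).
  move=> d; rewrite mem_filter (desc_sub (wf_sub wT iT) d) /=.
  case: (cd k hk g (proj2 (memPE _ _) (eq_ind _ (fun z => desc g z) d _ (esym hi)))) => k' k'k e.
  rewrite -e -(nth_take _ k'k); apply: mem_nth.
  by rewrite size_take_min leq_min k'k /= (ltn_trans k'k hk).
- apply: pairwise_filter; apply: (subseq_pairwise (take_subseq ord k)).
  apply/(pairwiseP (dflt n)) => a b ha hb ab; apply/negP => d.
  case: (cd a ha _ (proj2 (memPE _ _) d)) => k' k'a e.
  have := ci k' b (ltn_trans k'a ha) hb e => ek.
  by have := ltn_trans k'a ab; rewrite ek ltnn.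
- by move=> a b ha hb; apply: (trich wT); apply: fT.
Qed.

End Main.

Theorem theorem4 (C : numClosedFieldType) (n : nat)
  (A Sig : 'M[C]_n) (T : ctree n) (p q : seq bool) (Tr Ts : ctree n)
  (ordr ords : seq (ctree n)) :
  A \in unitmx ->
  (forall i j : 'I_n, (A i j != 0) = (A j i != 0)) ->
  (forall i j : 'I_n, i != j -> A i j = 0 -> Sig i j = 0) ->
  wf_ctree T -> clus T = [set: 'I_n] ->
  aug_tree T p = Some Tr -> aug_tree T q = Some Ts ->
  consistent_ordering Tr ordr -> consistent_ordering Ts ords ->
  (forall k, (k < size ordr)%N ->
     subM (elim_before A Sig ordr k).1 (priv A (nth (dflt n) ordr k)) \in unitmx) ->
  (forall k, (k < size ords)%N ->
     subM (elim_before A Sig ords k).1 (priv A (nth (dflt n) ords k)) \in unitmx) ->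
  forall (i : ctree n) (k1 k2 : nat),
    (k1 < size ordr)%N -> nth (dflt n) ordr k1 = i ->
    (k2 < size ords)%N -> nth (dflt n) ords k2 = i ->
    forall x y : 'I_n,
      x \in priv A i :|: boundary A (clus i) ->
      y \in priv A i :|: boundary A (clus i) ->
      (elim_before A Sig ordr k1).2 x y = (elim_before A Sig ords k2).2 x y.
Proof.
move=> _ _ _ wT eT hp hq cor cos _ _ i k1 k2 hk1 hi1 hk2 hi2 x y hx hy.
have wTr := aug_tree_wf wT eT hp.
have wTs := aug_tree_wf wT eT hq.
case: (side wTr cor hk1 hi1) => allr ur er pr tr.
case: (side wTs cos hk2 hi2) => alls us es ps ts.
have ag1 := fold_agree A allr (agree_refl (clus i) (A, Sig)).
have ag2 := fold_agree A alls (agree_refl (clus i) (A, Sig)).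
have eqf : foldl (elim_step A) (A, Sig) [seq g <- take k1 ordr | clus g \subset clus i]
         = foldl (elim_step A) (A, Sig) [seq g <- take k2 ords | clus g \subset clus i].
  apply: fold_perm => //.
  by apply: uniq_perm => // g; rewrite er es.
rewrite eqf in ag1.
case: (agree_trans ag1 (agree_sym ag2)) => _ e.
have sub : forall z, z \in priv A i :|: boundary A (clus i) -> z \in clus i.
  move=> z; rewrite inE => /orP[h|h].
    exact: (subsetP (priv_sub A i)).
  exact: (subsetP (bnd_sub A _)).
rewrite /elim_before.
rewrite -(proj_entry _ (sub _ hx) (sub _ hy)) -[in RHS](proj_entry _ (sub _ hx) (sub _ hy)).
exact: (congr1 (fun M : 'M[C]_n => M x y) e).
Qed.
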